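(* Let $\mathcal T=(T,\rho)$ be a rooted tree. The map $F_{\mathcal T}:\mathbb R^{\mathcal T}\to\mathbb R^{\mathcal T}$ is a homeomorphism and restricts to a homeomorphism from the smoothed to the rectilinear arboreal hypersurface, $F_{\mathcal T}:\mathsf H_{\mathcal T}\xrightarrow{\sim}H_{\mathcal T}$, satisfying $F_{\mathcal T}(\mathsf Q_\alpha)=Q_\alpha$ and $F_{\mathcal T}(\mathsf H_\alpha)=H_\alpha$ for all $\alpha\in V(T)$.
   Context: Rooted tree $\mathcal T=(T,\rho)$: a tree (nonempty finite connected acyclic graph) with root vertex $\rho$. Partial order on $V(T)$: $\alpha\le\beta$ iff $\alpha$ lies on the unique minimal path from $\rho$ to $\beta$; each $\alpha\ne\rho$ has a parent $\hat\alpha$ (adjacent, $\hat\alpha<\alpha$). $\mathbb R^{\mathcal T}=\mathbb R^{V(T)}$ with coordinates $x_\gamma$. Rectilinear: $Q_\alpha=\{x_\beta\ge0\text{ for all }\beta\le\alpha\}$, $H_\alpha=\partial Q_\alpha$, $H_{\mathcal T}=\bigcup_\alpha H_\alpha$. Smoothed: fix a $C^1$ function $b:\mathbb R_{>0}\to\mathbb R$ with $b\le0$, $\lim_{t\to0}b(t)=0$, $\lim_{t\to0}b'(t)=-\infty$, $b(t)=0$ for $t\gg0$, and a $C^1$ submersion $f:\mathbb R^2\to\mathbb R$ with $\{f=0\}=\{x_1=0,x_2\ge0\}\cup\{x_1>0,x_2=b(x_1)\}$, $\{f>0\}=\{x_1>0,x_2>b(x_1)\}$, $\{f<0\}=\{x_1<0\}\cup\{x_1=0,x_2<0\}\cup\{x_1>0,x_2<b(x_1)\}$.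 Set $h_\rho=x_\rho$, $h_\alpha=f(h_{\hat\alpha},x_\alpha)$ for $\alpha\ne\rho$; $\mathsf Q_\alpha=\{h_\alpha\ge0\}$, $\mathsf H_\alpha=\{h_\alpha=0\}$, $\mathsf H_{\mathcal T}=\bigcup_\alpha\mathsf H_\alpha$. Comparison map: $\varphi:\mathbb R^2\to\mathbb R$, $\varphi(x_1,x_2)=x_2$ if $x_1\le0$ and $x_2-b(x_1)$ if $x_1>0$. Set $F_\rho=x_\rho$, $F_\alpha=\varphi(h_{\hat\alpha},x_\alpha)$ for $\alpha\ne\rho$, and $F_{\mathcal T}=\{F_\alpha\}_{\alpha\in V(T)}:\mathbb R^{\mathcal T}\to\mathbb R^{\mathcal T}$. *)

(* Defs.v *)
From HB Require Import structures.
From mathcomp Require Import all_boot all_order all_algebra.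
From mathcomp Require Import all_classical all_reals all_analysis.
Set Implicit Arguments. Unset Strict Implicit. Unset Printing Implicit Defensive.
Import Order.TTheory GRing.Theory Num.Theory.
Import numFieldNormedType.Exports.
Local Open Scope classical_set_scope.
Local Open Scope ring_scope.

(* A rooted tree (T, rho) on the finite vertex type V is encoded by its parent
   map [par] : every vertex alpha <> rho has parent [par alpha] (the edges of
   T are exactly {alpha, par alpha}, alpha <> rho); [par rho = rho] by
   convention, and every vertex reaches the root by iterating [par]
   (connectedness/acyclicity). *)
Definition is_rooted_tree (V : finType) (rho : V) (par : V -> V) : Prop :=
  par rho = rho /\ forall v : V, exists n : nat, iter n par v = rho.

(* alpha <= beta iff alpha lies on the path from rho to beta, i.e. alpha is
   an iterated parent of beta *)
Definition tle (V : finType) (par : V -> V) (alpha beta : V) : Prop :=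
  exists n : nat, iter n par beta = alpha.

Section Data.
Variable R : realType.

(* b : R_{>0} -> R is C^1, b <= 0, b(t) -> 0 and b'(t) -> -oo as t -> 0+,
   b(t) = 0 for t large.  (Values of b at t <= 0 are irrelevant.) *)
Definition admissible_b (b : R -> R) : Prop :=
  (forall t : R, 0 < t -> derivable b t 1) /\
  (forall t : R, 0 < t -> {for t, continuous (derive1 b)}) /\
  (forall t : R, 0 < t -> b t <= 0) /\
  (b x @[x --> 0^'+] --> 0) /\
  (derive1 b x @[x --> 0^'+] --> -oo) /\
  (exists M : R, forall t : R, M < t -> b t = 0).

Definition admissible_f (b : R -> R) (f : R * R -> R) : Prop :=
  (forall p : R * R, differentiable f p) /\
  (forall v : R * R, continuous (fun p : R * R => 'D_v f p)) /\
  (forall p : R * R, exists v : R * R, 'd f p v != 0) /\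
  (forall x1 x2 : R, f (x1, x2) = 0 <->
      (x1 = 0 /\ 0 <= x2) \/ (0 < x1 /\ x2 = b x1)) /\
  (forall x1 x2 : R, 0 < f (x1, x2) <-> (0 < x1 /\ b x1 < x2)) /\
  (forall x1 x2 : R, f (x1, x2) < 0 <->
      x1 < 0 \/ (x1 = 0 /\ x2 < 0) \/ (0 < x1 /\ x2 < b x1)).

Definition phi (b : R -> R) (x1 x2 : R) : R :=
  if x1 <= 0 then x2 else x2 - b x1.

Variables (V : finType) (rho : V) (par : V -> V).

Definition Qrect (alpha : V) : set {ptws V -> R} :=
  [set x | forall beta, tle par beta alpha -> 0 <= x beta].
Definition Hrect (alpha : V) : set {ptws V -> R} :=
  closure (Qrect alpha) `\` interior (Qrect alpha).
Definition HrectT : set {ptws V -> R} := \bigcup_(alpha in [set: V]) Hrect alpha.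

(* smoothed: h_rho = x_rho, h_alpha = f(h_{parent alpha}, x_alpha);
   computed by recursion with fuel #|V| (>= depth + 1 of every vertex) *)
Fixpoint hfuel (f : R * R -> R) (n : nat) (alpha : V) (x : {ptws V -> R}) : R :=
  match n with
  | 0 => x alpha
  | n'.+1 => if alpha == rho then x rho
             else f (hfuel f n' (par alpha) x, x alpha)
  end.
Definition h (f : R * R -> R) (alpha : V) (x : {ptws V -> R}) : R :=
  hfuel f #|V| alpha x.

Definition Qsm (f : R * R -> R) (alpha : V) : set {ptws V -> R} :=
  [set x | 0 <= h f alpha x].
Definition Hsm (f : R * R -> R) (alpha : V) : set {ptws V -> R} :=
  [set x | h f alpha x = 0].
Definition HsmT (f : R * R -> R) : set {ptws V -> R} :=
  \bigcup_(alpha in [set: V]) Hsm f alpha.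

Definition FT (b : R -> R) (f : R * R -> R) (x : {ptws V -> R}) : {ptws V -> R} :=
  fun alpha => if alpha == rho then x rho
               else phi b (h f (par alpha) x) (x alpha).

End Data.

Definition homeomorphism (X Y : topologicalType) (F : X -> Y) : Prop :=
  exists G : Y -> X,
    cancel F G /\ cancel G F /\ continuous F /\ continuous G.

(* Main.v *)
Require Import Defs.
From HB Require Import structures.
From mathcomp Require Import all_boot all_order all_algebra.
From mathcomp Require Import all_classical all_reals all_analysis.
From mathcomp Require Import zify lra.
Import Order.TTheory GRing.Theory Num.Theory.
Import numFieldNormedType.Exports.
Local Open Scope classical_set_scope.
Local Open Scope ring_scope.

Section Pf.
Variable R : realType.
Variables (b : R -> R) (f : R * R -> R).
Variables (V : finType) (rho : V) (par : V -> V).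
Hypothesis parrho : par rho = rho.
Hypothesis reach : forall v, exists n, iter n par v = rho.

Local Notation PT := {ptws V -> R}.

Lemma depth_bound v : exists2 n, (n < #|V|)%N & iter n par v = rho.
Proof.
have ex : exists n, iter n par v == rho by have [n hn] := reach v; exists n; apply/eqP.
case: (ex_minnP ex) => d /eqP Hd Hmin.
exists d => //.
have claim : forall i j, (i < j <= d)%N -> iter i par v = iter j par v -> False.
  move=> i j /andP[ij jd] E.
  have : iter (d - j + i) par v == rho.
    by rewrite iterD E -iterD subnK // Hd.
  move/Hmin; lia.
have inj : injective (fun i : 'I_d.+1 => iter i par v).
  move=> i j /= Hij; apply/val_inj => /=.
  have := ltn_ord i; have := ltn_ord j => hj hi.
  case: (ltngtP i j) => // h.
  - by exfalso; apply: (claim i j) => //; apply/andP; split => //; lia.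
  - by exfalso; apply: (claim j i) => //; apply/andP; split => //; lia.
by have := leq_card _ inj; rewrite card_ord.
Qed.

Fixpoint gfuel (g : R -> R -> R) (n : nat) (a : V) (x : V -> R) : R :=
  match n with
  | 0 => x a
  | n'.+1 => if a == rho then x rho else g (gfuel g n' (par a) x) (x a)
  end.

Lemma hfuelE n a x : hfuel rho par f n a x = gfuel (fun u v => f (u, v)) n a x.
Proof. by elim: n a => //= n IH a; rewrite IH. Qed.

Lemma gfuel_stable g n a x : iter n par a = rho ->
  forall m, (n <= m)%N -> gfuel g m.+1 a x = gfuel g n.+1 a x.
Proof.
elim: n a => [|n IH] a /= Ha m nm.
  by rewrite Ha eqxx.
case: eqP => // _; case: m nm => // m nm.
rewrite (IH (par a)) //; by rewrite -iterSr.
Qed.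

Definition gk g a x := gfuel g #|V| a x.

Lemma grec g a x : a != rho -> gk g a x = g (gk g (par a) x) (x a).
Proof.
move=> na; have [n nV Hn] := depth_bound a.
case: n nV Hn => [|n] nV Hn; first by move: na; rewrite /= in Hn; rewrite Hn eqxx.
rewrite iterSr in Hn.
rewrite /gk; case E: #|V| nV => [|k] // nV.
case: k E nV => [|k] E nV; first by lia.
have e1 := gfuel_stable g n (par a) x Hn k ltac:(lia).
have e2 := gfuel_stable g n (par a) x Hn k.+1 ltac:(lia).
transitivity (g (gfuel g k.+1 (par a) x) (x a)); first by rewrite /= (negbTE na).
by rewrite e1 e2.
Qed.

Lemma groot g x : gk g rho x = x rho.
Proof.
have [n nV _] := depth_bound rho.
by rewrite /gk; case: #|V| nV => [|k] //= _; rewrite eqxx.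
Qed.

Lemma hrec a x : a != rho -> h rho par f a x = f (h rho par f (par a) x, x a).
Proof. by move=> na; rewrite /h !hfuelE; apply: (grec (fun u v => f (u, v))). Qed.

Lemma hroot x : h rho par f rho x = x rho.
Proof. by rewrite /h hfuelE; apply: groot. Qed.

Lemma tree_ind (P : V -> Prop) : P rho -> (forall a, a != rho -> P (par a) -> P a) ->
  forall a, P a.
Proof.
move=> H0 HS a; have [n Hn] := reach a; elim: n a Hn => [|n IH] a /= Ha.
  by rewrite Ha.
case: (eqVneq a rho) => [->//|ne]; apply: HS ne _; apply: IH; by rewrite -iterSr.
Qed.

Lemma tle_step be a : tle par be a <-> be = a \/ tle par be (par a).
Proof.
split.
  case=> [[|n]] /= H; first by left.
  by right; exists n; rewrite -iterSr.
case=> [->|[n Hn]]; first by exists 0%N.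
by exists n.+1; rewrite iterSr.
Qed.

Lemma tle_root be : tle par be rho <-> be = rho.
Proof. by split=> [[n]|->]; [rewrite iter_fix|exists 0%N]. Qed.

Definition c (u : R) : R := if u <= 0 then 0 else b u.

Lemma phiE u v : phi b u v = v - c u.
Proof. by rewrite /phi /c; case: ifP; rewrite ?subr0. Qed.

Hypothesis fzero : forall x1 x2 : R, f (x1, x2) = 0 <->
      (x1 = 0 /\ 0 <= x2) \/ (0 < x1 /\ x2 = b x1).
Hypothesis fpos : forall x1 x2 : R, 0 < f (x1, x2) <-> (0 < x1 /\ b x1 < x2).

Lemma fsign u v : (0 <= f (u, v) <-> 0 <= u /\ 0 <= v - c u) /\
  (f (u, v) = 0 <-> 0 <= u /\ 0 <= v - c u /\ (u = 0 \/ v - c u = 0)).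
Proof.
have ge : 0 <= f (u, v) <-> f (u, v) = 0 \/ 0 < f (u, v).
  by rewrite le_eqVlt; split=> [/orP[/eqP<-|]|[->|->]]; auto; rewrite ?eqxx ?orbT.
rewrite ge fzero fpos /c.
have : u < 0 \/ 0 < u \/ u = 0 by case: (ltgtP u 0); auto.
case=> [u0|[u0|u0]].
- rewrite ifT; last exact: ltW.
  split; split.
  + case=> [[[? ?]|[? ?]]|[? ?]]; lra.
  + case=> ? ?; lra.
  + case=> [[? ?]|[? ?]]; lra.
  + case=> ? ?; lra.
- rewrite ifF; last by apply/negbTE; rewrite -ltNge.
  split; split.
  + case=> [[[? ?]|[? ?]]|[? ?]]; split; lra.
  + case=> ? ?.
    have [e|e] : v = b u \/ b u < v.
      by case: (ltgtP v (b u)) => hh; [exfalso; lra|right|left].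
    * by left; right; split.
    * by right; split.
  + case=> [[? ?]|[? ?]]; [lra|split; [lra|split; [lra|right; lra]]].
  + case=> ? [? [?|?]]; [lra|right; split=> //; lra].
- rewrite u0 lexx.
  split; split.
  + case=> [[[? ?]|[? ?]]|[? ?]]; split; lra.
  + by case=> ? ?; left; left; split => //; lra.
  + case=> [[? ?]|[? ?]]; [split;[lra|split;[lra|left; lra]]|lra].
  + by case=> ? [? ?]; left; split=>//; lra.
Qed.

Local Notation hh := (h rho par f).
Local Notation FF := (FT rho par b f).

Lemma FT_root x : FF x rho = x rho.
Proof. by rewrite /FT eqxx. Qed.

Lemma FT_step x a : a != rho -> FF x a = x a - c (hh (par a) x).
Proof. by move=> na; rewrite /FT (negbTE na) phiE. Qed.

Lemma Qrect_root (y : PT) : Qrect par rho y <-> 0 <= y rho.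
Proof.
split=> [H|H be /tle_root ->//]; apply: H; exact/tle_root.
Qed.

Lemma Qrect_step (y : PT) a : Qrect par a y <-> 0 <= y a /\ Qrect par (par a) y.
Proof.
split=> [H|[H1 H2] be /tle_step [->//|]]; last exact: H2.
split; first by apply: H; apply/tle_step; left.
by move=> be hb; apply: H; apply/tle_step; right.
Qed.

Lemma ex_root (y : PT) : (exists2 be, tle par be rho & y be = 0) <-> y rho = 0.
Proof.
split=> [[be /tle_root -> //]|H]; exists rho => //; exact/tle_root.
Qed.

Lemma ex_step (y : PT) a : (exists2 be, tle par be a & y be = 0) <->
  y a = 0 \/ exists2 be, tle par be (par a) & y be = 0.
Proof.
split=> [[be /tle_step [->|]]|[H|[be H1 H2]]]; [by left|by right; exists be| |].
  by exists a => //; apply/tle_step; left.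
by exists be => //; apply/tle_step; right.
Qed.

Lemma AB x a : (0 <= hh a x <-> Qrect par a (FF x)) /\
  (hh a x = 0 <-> Qrect par a (FF x) /\ exists2 be, tle par be a & FF x be = 0).
Proof.
move: a; apply: tree_ind.
  rewrite hroot Qrect_root ex_root FT_root; split; first by [].
  by split=> [->|[]//]; split.
move=> a na [IA IB].
rewrite hrec //; have [s1 s2] := fsign (hh (par a) x) (x a).
rewrite s1 s2 Qrect_step ex_step -IA -FT_step //.
split; first by split=> [[? ?]|[? ?]]; split.
split.
- case=> u0 [ya0 [e|e]]; split; try (split=> //; by apply/IA).
  + by right; have [_ ?] := proj1 IB e.
  + by left.
- case=> [[ya0 Qp] [e|e]].
  + by split=> //; split=> //; right.
  + by split=> //; split=> //; left; apply/IB; split => //; apply/IA.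
Qed.

Definition kk a (y : PT) := gk (fun u v => f (u, v + c u)) a y.
Definition GG (y : PT) : PT := fun a => if a == rho then y rho else y a + c (kk (par a) y).

Lemma h_G y a : hh a (GG y) = kk a y.
Proof.
move: a; apply: tree_ind; first by rewrite hroot /kk groot /GG eqxx.
move=> a na IH; rewrite hrec // IH [RHS]/kk grec //.
by rewrite /GG (negbTE na).
Qed.

Lemma FG y : FF (GG y) = y.
Proof.
apply: funext => a; case: (eqVneq a rho) => [->|na].
  by rewrite FT_root /GG eqxx.
by rewrite FT_step // h_G /GG (negbTE na) addrK.
Qed.

Lemma k_F x a : kk a (FF x) = hh a x.
Proof.
move: a; apply: tree_ind; first by rewrite /kk groot hroot FT_root.
move=> a na IH; rewrite [LHS]/kk grec // -/(kk _ _) IH FT_step // subrK [RHS]hrec //.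
Qed.

Lemma GF x : GG (FF x) = x.
Proof.
apply: funext => a; rewrite /GG; case: (eqVneq a rho) => [->|na].
  by rewrite FT_root.
by rewrite k_F FT_step // subrK.
Qed.

Lemma proj_nbhs (y : PT) be (N : set R) : nbhs (y be) N -> nbhs y [set z : PT | N (z be)].
Proof. exact: (@proj_continuous V (fun _ => R) be y N). Qed.

Lemma cont_proj be : continuous (fun z : PT => z be).
Proof. by move=> y N HN; apply: proj_nbhs. Qed.

Lemma cont_into (T : topologicalType) (g : T -> PT) :
  (forall a, continuous (fun t => g t a)) -> continuous g.
Proof.
move=> H t; apply/cvg_sup => i A.
rewrite nbhsE => -[B [[C oC <-] Bs] sBA].
apply: (filterS sBA); apply: (H i t C).
apply: open_nbhs_nbhs; split => //.
Qed.

Lemma fin_near (T : Type) (F : set_system T) (FF : Filter F) (P : V -> T -> Prop) :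
  (forall i, F (P i)) -> F (fun z => forall i, P i z).
Proof. by move=> H; apply: filter_forall. Qed.

Lemma closQ a : closure (Qrect (R:=R) par a) `<=` Qrect par a.
Proof.
move=> y cy be hb; rewrite leNgt; apply/negP => yneg.
have := cy [set z : PT | z be < 0] (proj_nbhs y be _ (lt_nbhsl yneg)).
by case=> z [Qz zneg]; have := Qz be hb; rewrite leNgt zneg.
Qed.

Lemma intQ (y : PT) a : interior (Qrect (R:=R) par a) y <-> forall be, tle par be a -> 0 < y be.
Proof.
split; last first.
  move=> H.
  have : nbhs y (fun z : PT => forall be : V, (tle par be a -> 0 < z be)).
    apply: (@fin_near PT (nbhs y) _ (fun be (z : PT) => tle par be a -> 0 < z be)) => be.
    case: (pselect (tle par be a)) => hb.
      have := proj_nbhs y be _ (lt_nbhsr (H be hb)).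
      by apply: filterS => z zp _.
    by apply: (@nearW _ (nbhs y) _ (nbhs_filter y)) => z hb'.
  by apply: filterS => z Hz be hb; exact: ltW (Hz be hb).
move=> H be hb.
have Q0 : Qrect par a y := nbhs_singleton H.
have := Q0 be hb; rewrite le_eqVlt => /orP[/eqP e|//]; exfalso.
pose g (t : R) : PT := fun g0 => if g0 == be then t else y g0.
have g0 : g 0 = y by apply: funext => g1; rewrite /g; case: eqP => // ->.
have gc : continuous g.
  apply: cont_into => g1; rewrite /g; case: eqP => _ t.
  - exact: cvg_id.
  - exact: cvg_cst.
have N0 : nbhs (0:R) (g @^-1` Qrect par a).
  by have := gc 0 (Qrect par a); rewrite g0; apply.
have L : (0:R)^'- (g @^-1` Qrect par a) by apply: (filterS _ N0) => t Pt _.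
have [t [Qt tn]] := filter_ex (filterI L (nbhs_left_lt 0)).
by have := Qt be hb; rewrite /g eqxx leNgt tn.
Qed.

Lemma Hrect_char (y : PT) a : Hrect par a y <->
  Qrect par a y /\ exists2 be, tle par be a & y be = 0.
Proof.
rewrite /Hrect; split.
- case=> cy ni; have Qy := closQ a y cy; split=> //.
  apply: contrapT => nex; apply: ni; apply/intQ => be hb.
  have := Qy be hb; rewrite le_eqVlt => /orP[/eqP e|//]; exfalso.
  by apply: nex; exists be => //; rewrite -e.
- case=> Qy [be hb e]; split; first exact: subset_closure.
  by move/intQ => H; have := H be hb; rewrite e ltxx.
Qed.

Hypothesis bder : forall t : R, 0 < t -> derivable b t 1.
Hypothesis blim : b x @[x --> 0^'+] --> 0.
Hypothesis fdiff : forall p : R * R, differentiable f p.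

Lemma c_cont : continuous c.
Proof.
move=> t; change (c x @[x --> t] --> c t).
have : t < 0 \/ 0 < t \/ t = 0 by case: (ltgtP t 0); auto.
case=> [t0|[t0|->]].
- apply: (cvg_near_cst (c t)); have := lt_le_nbhsl t0.
  by apply: filterS => s s0; rewrite /c s0 (ltW t0).
- have -> : c t = b t by rewrite /c leNgt t0.
  have Hn : {near t, b =1 c}.
    by have := lt_nbhsr t0; apply: filterS => s s0; rewrite /c leNgt s0.
  apply: cvg_trans (near_eq_cvg Hn) _.
  have := @differentiable_continuous R R^o R^o t b (proj1 (derivable1_diffP b t) (bder t t0)).
  by [].
- apply/left_right_continuousP; split.
  + apply: (cvg_near_cst (c 0)); have := nbhs_left_le (0:R).
    by apply: filterS => s s0; rewrite /c s0 lexx.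
  + have -> : c 0 = 0 by rewrite /c lexx.
    have Hn : {near 0^'+, b =1 c}.
      by have := nbhs_right_gt (0:R); apply: filterS => s s0; rewrite /c leNgt s0.
    exact: cvg_trans (near_eq_cvg Hn) blim.
Qed.

Lemma cont_f2 (T : topologicalType) (g1 g2 : T -> R) : continuous g1 -> continuous g2 ->
  continuous (fun t => f (g1 t, g2 t)).
Proof.
move=> c1 c2 t.
apply: (@continuous2_cvg _ R R R _ _ g1 g2 (fun u v => f (u, v))); [|exact: c1|exact: c2].
have -> : (fun z : R * R => f (z.1, z.2)) = f by apply: funext => -[].
exact: differentiable_continuous (fdiff _).
Qed.

Lemma cont_addc (T : topologicalType) (g1 g2 : T -> R) : continuous g1 -> continuous g2 ->
  continuous (fun t => g1 t + c (g2 t)).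
Proof.
move=> c1 c2 t; apply: cvgD; first exact: c1.
exact: continuous_cvg (c_cont _) (c2 t).
Qed.

Lemma cont_subc (T : topologicalType) (g1 g2 : T -> R) : continuous g1 -> continuous g2 ->
  continuous (fun t => g1 t - c (g2 t)).
Proof.
move=> c1 c2 t; apply: cvgB; first exact: c1.
exact: continuous_cvg (c_cont _) (c2 t).
Qed.

Lemma hcont a : continuous (hh a).
Proof.
move: a; apply: tree_ind.
  have -> : hh rho = (fun z : PT => z rho) by apply: funext => z; exact: hroot.
  exact: cont_proj.
move=> a na IH.
have -> : hh a = (fun z : PT => f (hh (par a) z, z a)) by apply: funext => z; exact: hrec.
by apply: cont_f2 => //; exact: cont_proj.
Qed.

Lemma kcont a : continuous (kk a).
Proof.
move: a; apply: tree_ind.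
  have -> : kk rho = (fun z : PT => z rho) by apply: funext => z; exact: groot.
  exact: cont_proj.
move=> a na IH.
have -> : kk a = (fun z : PT => f (kk (par a) z, z a + c (kk (par a) z))).
  by apply: funext => z; rewrite /kk grec.
by apply: cont_f2 => //; apply: cont_addc => //; exact: cont_proj.
Qed.

Lemma FTcont : continuous FF.
Proof.
apply: cont_into => a; case: (eqVneq a rho) => [->|na].
  have -> : (fun t => FF t rho) = (fun t : PT => t rho) by apply: funext => t; exact: FT_root.
  exact: cont_proj.
have -> : (fun t => FF t a) = (fun t : PT => t a - c (hh (par a) t)).
  by apply: funext => t; exact: FT_step.
by apply: cont_subc; [exact: cont_proj|exact: hcont].
Qed.

Lemma GGcont : continuous GG.
Proof.
apply: cont_into => a; case: (eqVneq a rho) => [->|na].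
  have -> : (fun t => GG t rho) = (fun t : PT => t rho) by apply: funext => t; rewrite /GG eqxx.
  exact: cont_proj.
have -> : (fun t => GG t a) = (fun t : PT => t a + c (kk (par a) t)).
  by apply: funext => t; rewrite /GG (negbTE na).
by apply: cont_addc; [exact: cont_proj|exact: kcont].
Qed.

Lemma main : homeomorphism FF /\
  FF @` HsmT rho par f = HrectT (R:=R) par /\
  (forall alpha : V,
     FF @` Qsm rho par f alpha = Qrect (R:=R) par alpha /\
     FF @` Hsm rho par f alpha = Hrect (R:=R) par alpha).
Proof.
split.
  exists GG; split; first exact: GF.
  split; first exact: FG.
  by split; [exact: FTcont|exact: GGcont].
split.
  rewrite eqEsubset; split.
    move=> _ [x [a _ Hx] <-]; exists a => //; apply/Hrect_char; exact/(proj2 (AB x a)).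
  move=> y [a _ Hy]; exists (GG y); last exact: FG.
  exists a => //; apply/(proj2 (AB (GG y) a)); rewrite FG; exact/Hrect_char.
move=> a; split; rewrite eqEsubset; split.
- by move=> _ [x Hx <-]; apply/(proj1 (AB x a)).
- move=> y Hy; exists (GG y); last exact: FG.
  by apply/(proj1 (AB (GG y) a)); rewrite FG.
- move=> _ [x Hx <-]; apply/Hrect_char; exact/(proj2 (AB x a)).
- move=> y Hy; exists (GG y); last exact: FG.
  by apply/(proj2 (AB (GG y) a)); rewrite FG; exact/Hrect_char.
Qed.

End Pf.

Theorem proposition3p13 (R : realType) (b : R -> R) (f : R * R -> R)
  (V : finType) (rho : V) (par : V -> V) :
  admissible_b b -> admissible_f b f -> is_rooted_tree rho par ->
  let F := FT rho par b f in
  homeomorphism F /\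
  F @` HsmT rho par f = HrectT (R:=R) par /\
  (forall alpha : V,
     F @` Qsm rho par f alpha = Qrect (R:=R) par alpha /\
     F @` Hsm rho par f alpha = Hrect (R:=R) par alpha).
Proof.
move=> [bder [_ [_ [blim _]]]] [fdiff [_ [_ [fzero [fpos _]]]]] [parrho reach] F.
exact: (@main R b f V rho par parrho reach fzero fpos bder blim fdiff).
Qed.
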